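(* Given $\varepsilon>0$ and $q\in(1,\infty)$, the following holds for all sufficiently large $m\in\mathbb{N}$. Suppose $\mu,\nu$ are $2^{-m}$-measures with $\|\mu*\nu\|_q\ge2^{-\varepsilon m}\|\mu\|_q$. Then there exist integers $j,j'\le2\varepsilon q'm$ such that, setting \[ A=\{x:2^{-j-1}\|\mu\|_q^{q'}<\mu(x)\le2^{-j}\|\mu\|_q^{q'}\},\qquad B=\{y:2^{-j'-1}2^{-m}<\nu(y)\le2^{-j'}2^{-m}\}, \] we have: (i) $\|\mathbf{1}_A*\mathbf{1}_B\|_q\ge2^{-2\varepsilon m}\|\mathbf{1}_A\|_q\|\mathbf{1}_B\|_1$; (ii) $\|\mu|_A\|_q\ge2^{-2\varepsilon m}\|\mu\|_q$; (iii) $\nu(B)\ge2^{-2\varepsilon m}$.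
   Context: A $2^{-m}$-measure is a probability measure supported on $2^{-m}\mathbb{Z}\cap[0,1)$, viewed on the circle $\mathbb{R}/\mathbb{Z}$, where convolutions are taken. For finitely supported $f$ (measure or function), $\|f\|_q=(\sum_y f(y)^q)^{1/q}$; $q'=q/(q-1)$. *)

(* Defs.v *)
From Stdlib Require Import Reals Lra Lia ZArith Arith.
Open Scope R_scope.

Fixpoint sumN (n : nat) (f : nat -> R) : R :=
  match n with
  | O => 0
  | S k => sumN k f + f k
  end.

(* x^y for x >= 0, y > 0, with the convention 0^y = 0
   (Stdlib's Rpower 0 y = 1, which is wrong here). *)
Definition powr (x y : R) : R := if Rle_dec x 0 then 0 else Rpower x y.

(* The grid 2^{-m} Z ∩ [0,1) is identified with {0,...,2^m - 1}:
   index k <-> point k / 2^m.  Functions on the grid are nat -> R;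
   only values at k < 2^m matter. *)
Definition grid (m : nat) : nat := (2 ^ m)%nat.

Definition is_measure (m : nat) (mu : nat -> R) : Prop :=
  (forall k, (k < grid m)%nat -> 0 <= mu k) /\ sumN (grid m) mu = 1.

(* Convolution on R/Z restricted to the grid (= Z/2^m Z). *)
Definition conv (m : nat) (f g : nat -> R) (x : nat) : R :=
  sumN (grid m) (fun y => f y * g ((x + grid m - y) mod grid m)%nat).

Definition lqnorm (m : nat) (q : R) (f : nat -> R) : R :=
  powr (sumN (grid m) (fun y => powr (f y) q)) (1 / q).

Definition conj_exp (q : R) : R := q / (q - 1).

Definition band (a b : R) (f : nat -> R) (x : nat) : R :=
  if Rlt_dec a (f x) then (if Rle_dec (f x) b then 1 else 0) else 0.

Definition indA (m : nat) (q : R) (mu : nat -> R) (j : Z) : nat -> R :=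
  let M := powr (lqnorm m q mu) (conj_exp q) in
  band (powerRZ 2 (- j - 1) * M) (powerRZ 2 (- j) * M) mu.

Definition indB (m : nat) (nu : nat -> R) (j' : Z) : nat -> R :=
  let s := powerRZ 2 (- Z.of_nat m) in
  band (powerRZ 2 (- j' - 1) * s) (powerRZ 2 (- j') * s) nu.

Definition restrict (ind mu : nat -> R) (x : nat) : R := ind x * mu x.

Definition mass (m : nat) (ind nu : nat -> R) : R :=
  sumN (grid m) (fun y => ind y * nu y).

(* Main.v *)
Require Import Defs.
From Stdlib Require Import Reals Lra Lia ZArith Arith Classical.
Open Scope R_scope.

Lemma sumN_ext n f g : (forall k, (k < n)%nat -> f k = g k) -> sumN n f = sumN n g.
Proof. induction n; simpl; intros H; [reflexivity|]. rewrite IHn, H; auto. Qed.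

Lemma sumN_le n f g : (forall k, (k < n)%nat -> f k <= g k) -> sumN n f <= sumN n g.
Proof. induction n; simpl; intros H; [lra|]. assert (f n <= g n) by auto.
  assert (sumN n f <= sumN n g) by auto. lra. Qed.

Lemma sumN_nonneg n f : (forall k, (k < n)%nat -> 0 <= f k) -> 0 <= sumN n f.
Proof. intros H. replace 0 with (sumN n (fun _ => 0)). apply sumN_le; auto.
  induction n; simpl; auto. rewrite IHn; auto. lra. Qed.

Lemma sumN_plus n f g : sumN n (fun k => f k + g k) = sumN n f + sumN n g.
Proof. induction n; simpl; [lra|]. rewrite IHn; lra. Qed.

Lemma sumN_scal n c f : sumN n (fun k => c * f k) = c * sumN n f.
Proof. induction n; simpl; [lra|]. rewrite IHn; lra. Qed.

Lemma sumN_const n c : sumN n (fun _ => c) = INR n * c.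
Proof. induction n; simpl sumN; [simpl; lra|]. rewrite IHn, S_INR; lra. Qed.

Lemma sumN_swap n p (f : nat -> nat -> R) :
  sumN n (fun i => sumN p (fun j => f i j)) = sumN p (fun j => sumN n (fun i => f i j)).
Proof. induction n; simpl.
  - induction p; simpl; auto. rewrite <- IHp; lra.
  - rewrite IHn. rewrite <- sumN_plus. reflexivity. Qed.

Lemma sumN_term_le n f k : (forall i, (i < n)%nat -> 0 <= f i) -> (k < n)%nat -> f k <= sumN n f.
Proof. induction n; intros H Hk; [lia|]. simpl.
  destruct (Nat.eq_dec k n) as [->|Hne].
  - assert (0 <= sumN n f) by (apply sumN_nonneg; auto). lra.
  - assert (f k <= sumN n f) by (apply IHn; auto; lia). assert (0 <= f n) by auto. lra. Qed.

Lemma sumN_max n f : (0 < n)%nat -> exists i, (i < n)%nat /\ forall k, (k < n)%nat -> f k <= f i.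
Proof. induction n; intros H; [lia|]. destruct n.
  - exists 0%nat; split; auto. intros k Hk; replace k with 0%nat by lia; lra.
  - destruct IHn as [i [Hi Hm]]; [lia|].
    destruct (Rle_dec (f (S n)) (f i)).
    + exists i; split; [lia|]. intros k Hk. destruct (Nat.eq_dec k (S n)) as [->|]; auto. apply Hm; lia.
    + exists (S n); split; [lia|]. intros k Hk. destruct (Nat.eq_dec k (S n)) as [->|]; [lra|].
      assert (f k <= f i) by (apply Hm; lia). lra. Qed.

Lemma sumN_add a b f : sumN (a + b) f = sumN a f + sumN b (fun i => f (a + i)%nat).
Proof. induction b; simpl. rewrite Nat.add_0_r; lra.
  rewrite Nat.add_succ_r. simpl. rewrite IHb. lra. Qed.

Lemma sumN_shift1 n f : sumN (S n) f = f 0%nat + sumN n (fun i => f (S i)).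
Proof. transitivity (sumN (1+n) f); [reflexivity|]. rewrite sumN_add.
  change (sumN 1 f) with (0 + f 0%nat). rewrite Rplus_0_l. reflexivity. Qed.

Lemma sumN_rev n f : sumN n f = sumN n (fun i => f (n - 1 - i)%nat).
Proof. induction n; [reflexivity|]. rewrite sumN_shift1 with (f := fun i => f (S n - 1 - i)%nat).
  simpl sumN at 1. rewrite IHn. replace (S n - 1 - 0)%nat with n by lia.
  rewrite Rplus_comm. f_equal. apply sumN_ext. intros k Hk. f_equal. lia. Qed.

Lemma sumN_cshift N c g : (c <= N)%nat ->
  sumN N (fun x => g ((x + c) mod N)%nat) = sumN N g.
Proof. intros Hc.
  assert (E1 : forall F, sumN N F = sumN ((N - c) + c) F) by (intros; f_equal; lia).
  assert (E2 : forall F, sumN N F = sumN (c + (N - c)) F) by (intros; f_equal; lia).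
  rewrite E1, (E2 g), !sumN_add.
  rewrite Rplus_comm. f_equal.
  - apply sumN_ext. intros k Hk. f_equal.
    replace (N - c + k + c)%nat with (k + 1 * N)%nat by lia. rewrite Nat.Div0.mod_add.
    rewrite Nat.mod_small; lia.
  - apply sumN_ext. intros k Hk. f_equal. rewrite Nat.mod_small; lia. Qed.

Lemma powr_nonneg x y : 0 <= powr x y.
Proof. unfold powr. destruct (Rle_dec x 0); [lra|]. unfold Rpower. left; apply exp_pos. Qed.

Lemma powr_pos x y : 0 < x -> powr x y = Rpower x y.
Proof. unfold powr. destruct (Rle_dec x 0); [lra|auto]. Qed.

Lemma powr_0 y : powr 0 y = 0.
Proof. unfold powr. destruct (Rle_dec 0 0); lra. Qed.

Lemma powr_gt0 x y : 0 < x -> 0 < powr x y.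
Proof. intros. rewrite powr_pos by auto. unfold Rpower; apply exp_pos. Qed.

Lemma powr_mono y a b : 0 <= y -> 0 <= a <= b -> powr a y <= powr b y.
Proof. intros Hy [Ha Hab]. destruct Ha as [Ha| <-].
  - rewrite !powr_pos by lra. apply Rle_Rpower_l; lra.
  - rewrite powr_0. apply powr_nonneg. Qed.

Lemma powr_smono y a b : 0 < y -> 0 <= a < b -> powr a y < powr b y.
Proof. intros Hy [Ha Hab]. destruct Ha as [Ha| <-].
  - rewrite !powr_pos by lra. apply Rlt_Rpower_l; lra.
  - rewrite powr_0. apply powr_gt0; lra. Qed.

Lemma powr_mono_inv y a b : 0 < y -> 0 <= a -> 0 <= b -> powr a y <= powr b y -> a <= b.
Proof. intros Hy Ha Hb H. destruct (Rle_dec a b); auto.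
  assert (powr b y < powr a y) by (apply powr_smono; lra). lra. Qed.

Lemma powr_mul y a b : 0 <= a -> 0 <= b -> powr (a * b) y = powr a y * powr b y.
Proof. intros [Ha| <-] [Hb| <-]; rewrite ?Rmult_0_l, ?Rmult_0_r, ?powr_0; try lra.
  rewrite !powr_pos by (try apply Rmult_lt_0_compat; lra). rewrite Rpower_mult_distr; auto. Qed.

Lemma powr_powr y z a : 0 <= a -> powr (powr a y) z = powr a (y * z).
Proof. intros [Ha| <-]; [|rewrite !powr_0; auto].
  rewrite (powr_pos a y) by auto. rewrite powr_pos by (unfold Rpower; apply exp_pos).
  rewrite powr_pos by auto. apply Rpower_mult. Qed.

Lemma powr_plus y z a : 0 <= a -> powr a (y + z) = powr a y * powr a z.
Proof. intros [Ha| <-]; [|rewrite !powr_0; lra]. rewrite !powr_pos by auto. apply Rpower_plus. Qed.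

Lemma powr_1r a : 0 <= a -> powr a 1 = a.
Proof. intros [Ha| <-]; [|apply powr_0]. rewrite powr_pos by auto. apply Rpower_1; auto. Qed.

Lemma powr_1l y : powr 1 y = 1.
Proof. rewrite powr_pos by lra. unfold Rpower. rewrite ln_1, Rmult_0_r. apply exp_0. Qed.

Lemma powr_split q a : 0 <= a -> powr a q = powr a (q - 1) * a.
Proof. intros Ha. replace q with ((q - 1) + 1) at 1 by lra. rewrite powr_plus, powr_1r; auto. Qed.

Lemma powr_le1 y a : 0 <= y -> 0 <= a <= 1 -> powr a y <= 1.
Proof. intros. rewrite <- (powr_1l y). apply powr_mono; lra. Qed.

Lemma powr_ge1_exp a y z : 1 <= a -> y <= z -> powr a y <= powr a z.
Proof. intros. rewrite !powr_pos by lra. apply Rle_Rpower; auto. Qed.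

Lemma powr_ge1 a y : 0 <= y -> 1 <= a -> 1 <= powr a y.
Proof. intros. rewrite <- (powr_1l y). apply powr_mono; lra. Qed.

Lemma crude_sum q n a : 0 < q -> (forall i, (i < n)%nat -> 0 <= a i) ->
  powr (sumN n a) q <= powr (INR n) q * sumN n (fun i => powr (a i) q).
Proof. intros Hq Ha. destruct n.
  - simpl. rewrite powr_0. lra.
  - destruct (sumN_max (S n) a) as [i [Hi Hm]]; [lia|].
    assert (sumN (S n) a <= INR (S n) * a i).
    { rewrite <- sumN_const. apply sumN_le; auto. }
    apply Rle_trans with (powr (INR (S n) * a i) q).
    + apply powr_mono; [lra|]. split; auto. apply sumN_nonneg; auto.
    + rewrite powr_mul by (auto; apply pos_INR). apply Rmult_le_compat_l; [apply powr_nonneg|].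
      apply (sumN_term_le (S n) (fun i => powr (a i) q)); auto. intros; apply powr_nonneg. Qed.

Lemma crude2 q a b : 0 < q -> 0 <= a -> 0 <= b -> powr (a + b) q <= powr 2 q * (powr a q + powr b q).
Proof. intros Hq Ha Hb. destruct (Rle_dec a b).
  - apply Rle_trans with (powr (2 * b) q). apply powr_mono; lra.
    rewrite powr_mul by lra. assert (0 <= powr a q) by apply powr_nonneg.
    assert (0 <= powr 2 q) by apply powr_nonneg. nra.
  - apply Rle_trans with (powr (2 * a) q). apply powr_mono; lra.
    rewrite powr_mul by lra. assert (0 <= powr b q) by apply powr_nonneg.
    assert (0 <= powr 2 q) by apply powr_nonneg. nra. Qed.

Lemma grid_pos m : (0 < grid m)%nat.
Proof. unfold grid. apply Nat.neq_0_lt_0. apply Nat.pow_nonzero. lia. Qed.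

Lemma idx_lt m x y : ((x + grid m - y) mod grid m < grid m)%nat.
Proof. apply Nat.mod_upper_bound. pose proof (grid_pos m). lia. Qed.

Section Conv.
Variable m : nat.
Notation N := (grid m).

Lemma conv_nonneg f g x : (forall k, (k < N)%nat -> 0 <= f k) -> (forall k, (k < N)%nat -> 0 <= g k) ->
  0 <= conv m f g x.
Proof. intros Hf Hg. unfold conv. apply sumN_nonneg. intros k Hk.
  apply Rmult_le_pos; auto. apply Hg, idx_lt. Qed.

Lemma conv_mono f g f' g' x :
  (forall k, (k < N)%nat -> 0 <= f k <= f' k) -> (forall k, (k < N)%nat -> 0 <= g k <= g' k) ->
  conv m f g x <= conv m f' g' x.
Proof. intros Hf Hg. unfold conv. apply sumN_le. intros k Hk.
  destruct (Hf k Hk). destruct (Hg _ (idx_lt m x k)). apply Rmult_le_compat; lra. Qed.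

Lemma conv_addl f1 f2 g x : conv m (fun z => f1 z + f2 z) g x = conv m f1 g x + conv m f2 g x.
Proof. unfold conv. rewrite <- sumN_plus. apply sumN_ext; intros; lra. Qed.

Lemma conv_addr f g1 g2 x : conv m f (fun z => g1 z + g2 z) x = conv m f g1 x + conv m f g2 x.
Proof. unfold conv. rewrite <- sumN_plus. apply sumN_ext; intros; lra. Qed.

Lemma conv_suml L F g x : conv m (fun z => sumN L (fun i => F i z)) g x = sumN L (fun i => conv m (F i) g x).
Proof. unfold conv. rewrite sumN_swap. apply sumN_ext; intros.
  rewrite Rmult_comm, <- sumN_scal. apply sumN_ext; intros; lra. Qed.

Lemma conv_sumr L f G x : conv m f (fun z => sumN L (fun i => G i z)) x = sumN L (fun i => conv m f (G i) x).
Proof. unfold conv. rewrite sumN_swap. apply sumN_ext; intros.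
  rewrite <- sumN_scal. apply sumN_ext; intros; lra. Qed.

Lemma conv_scal a b f g x : conv m (fun z => a * f z) (fun z => b * g z) x = a * b * conv m f g x.
Proof. unfold conv. rewrite <- sumN_scal. apply sumN_ext; intros; lra. Qed.

Lemma sum_reflect g x : (x < N)%nat -> sumN N (fun y => g ((x + N - y) mod N)%nat) = sumN N g.
Proof. intros Hx. rewrite sumN_rev. rewrite <- (sumN_cshift N (S x) g) by lia.
  apply sumN_ext. intros k Hk. f_equal. f_equal. lia. Qed.

Lemma conv_boundr f g c x : (forall k, (k < N)%nat -> 0 <= f k) -> (forall k, (k < N)%nat -> g k <= c) ->
  conv m f g x <= c * sumN N f.
Proof. intros Hf Hg. unfold conv. rewrite <- sumN_scal. apply sumN_le. intros k Hk.
  specialize (Hf k Hk). specialize (Hg _ (idx_lt m x k)). nra. Qed.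

Lemma conv_boundl f g c x : (x < N)%nat -> (forall k, (k < N)%nat -> f k <= c) -> (forall k, (k < N)%nat -> 0 <= g k) ->
  conv m f g x <= c * sumN N g.
Proof. intros Hx Hf Hg. pose proof (sum_reflect g x Hx) as E. apply Rle_trans with (c * sumN N (fun y => g ((x + N - y) mod N)%nat)); [|right; rewrite E; reflexivity]. unfold conv. rewrite <- sumN_scal. apply sumN_le. intros k Hk.
  specialize (Hf k Hk). specialize (Hg _ (idx_lt m x k)). nra. Qed.

Lemma conv_total f g : sumN N (fun x => conv m f g x) = sumN N f * sumN N g.
Proof. unfold conv. rewrite sumN_swap. rewrite Rmult_comm, <- sumN_scal. apply sumN_ext. intros y Hy.
  rewrite (sumN_scal N (f y) (fun x => g ((x + N - y) mod N)%nat)).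
  rewrite <- (sumN_cshift N (N - y) g) by lia. rewrite Rmult_comm. f_equal.
  apply sumN_ext. intros k Hk. f_equal. f_equal. lia. Qed.

Definition Sq q f := sumN N (fun y => powr (f y) q).

Lemma Sq_nonneg q f : 0 <= Sq q f.
Proof. apply sumN_nonneg; intros; apply powr_nonneg. Qed.

Lemma Sq_mono q f g : 0 <= q -> (forall k, (k < N)%nat -> 0 <= f k <= g k) -> Sq q f <= Sq q g.
Proof. intros. apply sumN_le; intros. apply powr_mono; auto. Qed.

Lemma Sq_bound q f c : 1 < q -> (forall k, (k < N)%nat -> 0 <= f k <= c) -> Sq q f <= powr c (q - 1) * sumN N f.
Proof. intros Hq H. unfold Sq. rewrite <- sumN_scal. apply sumN_le. intros k Hk. destruct (H k Hk).
  rewrite powr_split by auto. apply Rmult_le_compat_r; auto. apply powr_mono; lra. Qed.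

Lemma Sq_lower q f c : 1 < q -> 0 <= c -> (forall k, (k < N)%nat -> f k = 0 \/ c <= f k) ->
  powr c (q - 1) * sumN N f <= Sq q f.
Proof. intros Hq Hc H. unfold Sq. rewrite <- sumN_scal. apply sumN_le. intros k Hk.
  destruct (H k Hk) as [E|E].
  - rewrite E, Rmult_0_r, powr_0. lra.
  - rewrite (powr_split q) by lra. apply Rmult_le_compat_r; [lra|]. apply powr_mono; lra. Qed.

Lemma Sq_scal q a f : 0 <= a -> (forall k, (k < N)%nat -> 0 <= f k) -> Sq q (fun x => a * f x) = powr a q * Sq q f.
Proof. intros Ha Hf. unfold Sq. rewrite <- sumN_scal. apply sumN_ext. intros. apply powr_mul; auto. Qed.

End Conv.

Definition r2 (x : R) := Rpower 2 x.
Lemma r2_pos x : 0 < r2 x.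
Proof. unfold r2, Rpower. apply exp_pos. Qed.
Lemma r2_plus x y : r2 (x + y) = r2 x * r2 y.
Proof. apply Rpower_plus. Qed.
Lemma r2_le x y : x <= y -> r2 x <= r2 y.
Proof. intros; apply Rle_Rpower; lra. Qed.
Lemma r2_0 : r2 0 = 1.
Proof. apply Rpower_O; lra. Qed.
Lemma r2_1 : r2 1 = 2.
Proof. apply Rpower_1; lra. Qed.
Lemma r2_INR n : r2 (INR n) = 2 ^ n.
Proof. apply Rpower_pow; lra. Qed.
Lemma r2_opp x : r2 (- x) = / r2 x.
Proof. apply Rpower_Ropp. Qed.
Lemma powr_r2 x y : powr (r2 x) y = r2 (x * y).
Proof. rewrite powr_pos by apply r2_pos. unfold r2. apply Rpower_mult. Qed.
Lemma powerRZ_r2 z : powerRZ 2 z = r2 (IZR z).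
Proof. apply powerRZ_Rpower; lra. Qed.
Lemma grid_r2 m : INR (grid m) = r2 (INR m).
Proof. unfold grid. rewrite pow_INR, r2_INR. reflexivity. Qed.

Lemma band_01 a b f x : band a b f x = 0 \/ band a b f x = 1.
Proof. unfold band. destruct (Rlt_dec a (f x)); [destruct (Rle_dec (f x) b)|]; auto. Qed.

Lemma band_1 a b f x : band a b f x = 1 -> a < f x <= b.
Proof. unfold band. destruct (Rlt_dec a (f x)); [destruct (Rle_dec (f x) b)|]; intros; split; lra. Qed.

Lemma band_eq1 a b f x : a < f x <= b -> band a b f x = 1.
Proof. intros [H1 H2]. unfold band. destruct (Rlt_dec a (f x)); [destruct (Rle_dec (f x) b)|]; lra. Qed.

Lemma cover n c t : 0 < c -> c < t -> t <= 2 ^ n * c ->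
  exists i, (i < n)%nat /\ 2 ^ i * c < t <= 2 ^ (S i) * c.
Proof. intros Hc. revert t. induction n; intros t H1 H2.
  - simpl in H2. lra.
  - destruct (Rle_dec t (2 ^ n * c)) as [Hle|Hgt].
    + destruct (IHn t H1 Hle) as [i [Hi Hb]]. exists i; split; [lia|auto].
    + exists n; split; [lia|]. split; lra. Qed.

Lemma IZR_lev a b : IZR (- (Z.of_nat a - Z.of_nat b) - 1) = INR b + (- INR a - 1).
Proof. rewrite minus_IZR, opp_IZR, minus_IZR, <- !INR_IZR_INZ. lra. Qed.

Lemma IZR_lev2 a b : IZR (- (Z.of_nat a - Z.of_nat b)) = INR (S b) + (- INR a - 1).
Proof. rewrite opp_IZR, minus_IZR, <- !INR_IZR_INZ, S_INR. lra. Qed.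

Lemma to_root q A B c : 0 < q -> 0 <= A -> 0 <= B -> 0 <= c ->
  A >= powr c q * B -> powr A (1 / q) >= c * powr B (1 / q).
Proof. intros Hq HA HB Hc H. apply Rle_ge.
  replace c with (powr (powr c q) (1 / q)).
  - rewrite <- powr_mul by (auto; apply powr_nonneg). apply powr_mono.
    + left; apply Rdiv_lt_0_compat; lra.
    + split; [apply Rmult_le_pos; auto; apply powr_nonneg|lra].
  - rewrite powr_powr by auto. replace (q * (1 / q)) with 1 by (field; lra). apply powr_1r; auto. Qed.

Lemma from_root q A B c : 0 < q -> 0 <= A -> 0 <= B -> 0 <= c ->
  powr A (1 / q) >= c * powr B (1 / q) -> A >= powr c q * B.
Proof. intros Hq HA HB Hc H. apply Rle_ge.
  assert (E : forall X, 0 <= X -> powr (powr X (1 / q)) q = X).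
  { intros X HX. rewrite powr_powr by auto. replace (1 / q * q) with 1 by (field; lra). apply powr_1r; auto. }
  rewrite <- (E A HA), <- (E B HB), <- powr_mul by (auto; apply powr_nonneg).
  apply powr_mono; [lra|]. split; [apply Rmult_le_pos; auto; apply powr_nonneg|lra]. Qed.

Lemma lqnorm_Sq m q f : lqnorm m q f = powr (Sq m q f) (1 / q).
Proof. reflexivity. Qed.

Lemma measure_le1 m mu k : is_measure m mu -> (k < grid m)%nat -> 0 <= mu k <= 1.
Proof. intros [H1 H2] Hk. split; auto. rewrite <- H2. apply (sumN_term_le (grid m) mu); auto. Qed.

Lemma Sq_measure_lower m q mu : 1 < q -> is_measure m mu ->
  r2 (- (INR m + 1) * (q - 1)) * / 2 <= Sq m q mu.
Proof. intros Hq Hmu. set (N := grid m). set (e := r2 (- (INR m + 1))).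
  assert (He : e * INR N = / 2).
  { unfold e, N. rewrite grid_r2, <- r2_plus. replace (- (INR m + 1) + INR m) with (- (1)) by ring.
    rewrite r2_opp, r2_1. reflexivity. }
  assert (He0 : 0 < e) by apply r2_pos.
  set (g := fun x => if Rle_dec e (mu x) then mu x else 0).
  assert (Hg : forall k, (k < N)%nat -> 0 <= g k <= mu k).
  { intros k Hk. destruct (measure_le1 m mu k Hmu Hk). unfold g. destruct (Rle_dec e (mu k)); lra. }
  assert (Hsum : / 2 <= sumN N g).
  { destruct Hmu as [H1 H2]. assert (sumN N mu <= sumN N (fun x => g x + e)).
    { apply sumN_le. intros k Hk. unfold g. destruct (Rle_dec e (mu k)); try lra.
      }
    rewrite sumN_plus, sumN_const in H. fold N in H2. lra. }
  apply Rle_trans with (Sq m q g); [|apply Sq_mono; auto; lra].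
  apply Rle_trans with (powr e (q - 1) * sumN N g).
  - unfold e. rewrite powr_r2. apply Rmult_le_compat_l; [left; apply r2_pos|lra].
  - apply Sq_lower; [lra|lra|]. intros k Hk. unfold g. destruct (Rle_dec e (mu k)); lra. Qed.

Lemma exp_INR_mult k y : exp (INR k * y) = exp y ^ k.
Proof. induction k. simpl. rewrite Rmult_0_l; apply exp_0.
  rewrite S_INR, Rmult_plus_distr_r, Rmult_1_l, exp_plus, IHk. simpl. ring. Qed.

Lemma up_nat x : 0 <= x -> x <= INR (Z.to_nat (up x)).
Proof. intros Hx. destruct (archimed x) as [H1 H2].
  assert (0 < up x)%Z by (apply lt_IZR; lra).
  rewrite INR_IZR_INZ, Z2Nat.id by lia. lra. Qed.

Lemma asym K a b p d : 0 < K -> 0 < a -> 0 <= b -> 0 < p -> 0 < d ->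
  exists M0, forall m, (M0 <= m)%nat -> K * powr (a * INR m + b) p <= r2 (d * INR m).
Proof. intros HK Ha Hb Hp Hd.
  set (n := Z.to_nat (up p)). assert (Hn : p <= INR n) by (apply up_nat; lra).
  set (C := a + b + 1). set (g := d * ln 2).
  assert (Hg : 0 < g) by (unfold g; pose proof ln_lt_2; nra).
  assert (HSn : 0 < INR (S n)) by (apply lt_0_INR; lia).
  set (D := (g / INR (S n)) ^ (S n)).
  assert (HD : 0 < D) by (apply pow_lt; apply Rdiv_lt_0_compat; lra).
  set (B := K * C ^ n / D).
  exists (S (Z.to_nat (up (Rmax B 0)))). intros m Hm.
  assert (Hm1 : 1 <= INR m) by (apply (le_INR 1); lia).
  assert (HmB : B <= INR m).
  { pose proof (up_nat (Rmax B 0) (Rmax_r _ _)). apply le_INR in Hm. rewrite S_INR in Hm.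
    pose proof (Rmax_l B 0). lra. }
  assert (Hx : 0 <= a * INR m + b) by nra.
  apply Rle_trans with (K * (C ^ n * INR m ^ n)).
  { apply Rmult_le_compat_l; [lra|].
    apply Rle_trans with (powr (a * INR m + b + 1) p). apply powr_mono; lra.
    apply Rle_trans with (powr (a * INR m + b + 1) (INR n)). apply powr_ge1_exp; lra.
    rewrite powr_pos by lra. rewrite Rpower_pow by lra. rewrite <- Rpow_mult_distr.
    apply pow_incr. split; [lra|]. unfold C. nra. }
  unfold r2, Rpower. replace (d * INR m * ln 2) with (INR (S n) * (g * INR m / INR (S n))).
  2:{ unfold g. field. lra. }
  rewrite exp_INR_mult.
  apply Rle_trans with ((g * INR m / INR (S n)) ^ (S n)).
  2:{ apply pow_incr. split. unfold Rdiv; apply Rmult_le_pos; [nra|left; apply Rinv_0_lt_compat; lra]. pose proof (exp_ineq1_le (g * INR m / INR (S n))). lra. }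
  replace (g * INR m / INR (S n)) with (g / INR (S n) * INR m) by (field; lra).
  rewrite Rpow_mult_distr. fold D. simpl (INR m ^ S n).
  assert (K * C ^ n <= D * INR m).
  { unfold B in HmB. apply Rmult_le_reg_r with (/ D). apply Rinv_0_lt_compat; lra.
    replace (D * INR m * / D) with (INR m) by (field; lra). lra. }
  assert (0 <= INR m ^ n) by (apply pow_le; lra). nra. Qed.

Section Decomp.
Variables (m : nat) (q : R) (f g ft gt : nat -> R) (F G : nat -> nat -> R) (L L' : nat).
Notation N := (grid m).
Hypothesis Hq : 0 < q.
Hypothesis Hf : forall k, (k < N)%nat -> 0 <= f k.
Hypothesis Hg : forall k, (k < N)%nat -> 0 <= g k.
Hypothesis Hft : forall k, (k < N)%nat -> 0 <= ft k.
Hypothesis Hgt : forall k, (k < N)%nat -> 0 <= gt k.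
Hypothesis HF : forall i k, (k < N)%nat -> 0 <= F i k <= f k.
Hypothesis HG : forall i k, (k < N)%nat -> 0 <= G i k.
Hypothesis Hfd : forall k, (k < N)%nat -> f k <= ft k + sumN L (fun i => F i k).
Hypothesis Hgd : forall k, (k < N)%nat -> g k <= gt k + sumN L' (fun i => G i k).

Lemma decomp_pt x :
  powr (conv m f g x) q <= powr 2 q * powr (conv m ft g x) q + powr 2 q * powr (INR L) q *
    sumN L (fun i => powr 2 q * (powr (conv m f gt x) q + powr (INR L') q *
      sumN L' (fun i' => powr (conv m (F i) (G i') x) q))).
Proof.
  assert (HFi : forall i k, (k < N)%nat -> 0 <= F i k) by (intros; apply HF; auto).
  assert (Hsg : forall k, (k < N)%nat -> 0 <= gt k + sumN L' (fun i => G i k)).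
  { intros. pose proof (Hgt k H). assert (0 <= sumN L' (fun i => G i k)) by (apply sumN_nonneg; auto). lra. }
  assert (H1 : conv m f g x <= conv m ft g x + sumN L (fun i => conv m f gt x + sumN L' (fun i' => conv m (F i) (G i') x))).
  { apply Rle_trans with (conv m (fun z => ft z + sumN L (fun i => F i z)) g x).
    { apply conv_mono; intros k Hk; split; auto; lra. }
    rewrite conv_addl, conv_suml. apply Rplus_le_compat_l. apply sumN_le. intros i Hi.
    apply Rle_trans with (conv m (F i) (fun z => gt z + sumN L' (fun i' => G i' z)) x).
    { apply conv_mono; intros k Hk; split; auto; lra. }
    rewrite conv_addr, conv_sumr. apply Rplus_le_compat_r. apply conv_mono; intros k Hk; split; auto; try lra.
    apply HF; auto. }
  assert (Hc : forall a b, (forall k, (k < N)%nat -> 0 <= a k) -> (forall k, (k < N)%nat -> 0 <= b k) -> 0 <= conv m a b x)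
    by (intros; apply conv_nonneg; auto).
  assert (He : forall i, 0 <= conv m f gt x + sumN L' (fun i' => conv m (F i) (G i') x)).
  { intros. assert (0 <= conv m f gt x) by auto. assert (0 <= sumN L' (fun i' => conv m (F i) (G i') x)).
    apply sumN_nonneg; intros; apply Hc; auto. lra. }
  apply Rle_trans with (powr (conv m ft g x + sumN L (fun i => conv m f gt x + sumN L' (fun i' => conv m (F i) (G i') x))) q).
  { apply powr_mono; [lra|]. split; auto. }
  assert (0 <= conv m ft g x) by auto.
  assert (0 <= sumN L (fun i => conv m f gt x + sumN L' (fun i' => conv m (F i) (G i') x))) by (apply sumN_nonneg; intros; auto).
  eapply Rle_trans. apply crude2; auto.
  rewrite Rmult_plus_distr_l, Rmult_assoc. apply Rplus_le_compat_l. apply Rmult_le_compat_l; [apply powr_nonneg|].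
  eapply Rle_trans. apply crude_sum; auto. apply Rmult_le_compat_l; [apply powr_nonneg|].
  apply sumN_le. intros i Hi.
  assert (0 <= conv m f gt x) by auto.
  assert (0 <= sumN L' (fun i' => conv m (F i) (G i') x)) by (apply sumN_nonneg; intros; apply Hc; auto).
  eapply Rle_trans. apply crude2; auto.
  apply Rmult_le_compat_l; [apply powr_nonneg|]. apply Rplus_le_compat_l.
  apply crude_sum; auto; intros; apply Hc; auto. Qed.

Lemma decomp :
  Sq m q (conv m f g) <= powr 2 q * Sq m q (conv m ft g) + powr 2 q * powr (INR L) q *
    sumN L (fun i => powr 2 q * (Sq m q (conv m f gt) + powr (INR L') q *
      sumN L' (fun i' => Sq m q (conv m (F i) (G i'))))).
Proof.
  unfold Sq at 1. eapply Rle_trans. apply sumN_le. intros x Hx. apply decomp_pt.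
  right. rewrite sumN_plus. rewrite (sumN_scal N (powr 2 q)). rewrite (sumN_scal N (powr 2 q * powr (INR L) q)).
  f_equal. f_equal. unfold Sq. rewrite sumN_swap. apply sumN_ext; intros i Hi.
  rewrite (sumN_scal N (powr 2 q)), sumN_plus, (sumN_scal N (powr (INR L') q)), sumN_swap. reflexivity. Qed.
End Decomp.

Section Pair.
Variables (m : nat) (q : R) (mu nu IA IB : nat -> R) (al be : R).
Notation N := (grid m).
Hypothesis Hq : 1 < q.
Hypothesis Hmu : is_measure m mu.
Hypothesis Hnu : is_measure m nu.
Hypothesis Hal : 0 < al.
Hypothesis Hbe : 0 < be.
Hypothesis HIA : forall k, IA k = 0 \/ IA k = 1.
Hypothesis HIB : forall k, IB k = 0 \/ IB k = 1.
Hypothesis HA : forall k, IA k = 1 -> al / 2 < mu k <= al.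
Hypothesis HB : forall k, IB k = 1 -> be / 2 < nu k <= be.

Let muA := restrict IA mu.
Let nuB := restrict IB nu.

Lemma muA_bnd k : (k < N)%nat -> 0 <= muA k <= mu k /\ muA k <= al * IA k /\ al / 2 * IA k <= muA k.
Proof. intros Hk. destruct (measure_le1 m mu k Hmu Hk). unfold muA, restrict.
  destruct (HIA k) as [E|E]; rewrite E; [lra|]. destruct (HA k E). lra. Qed.

Lemma nuB_bnd k : (k < N)%nat -> 0 <= nuB k <= nu k /\ nuB k <= be * IB k /\ be / 2 * IB k <= nuB k.
Proof. intros Hk. destruct (measure_le1 m nu k Hnu Hk). unfold nuB, restrict.
  destruct (HIB k) as [E|E]; rewrite E; [lra|]. destruct (HB k E). lra. Qed.

Lemma IA_nn k : 0 <= IA k. Proof. destruct (HIA k) as [E|E]; lra. Qed.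
Lemma IB_nn k : 0 <= IB k. Proof. destruct (HIB k) as [E|E]; lra. Qed.

Lemma mass_bnd : 0 <= mass m IB nu <= 1.
Proof. unfold mass. split. apply sumN_nonneg; intros. apply (nuB_bnd k); auto.
  destruct Hnu as [_ H]. rewrite <- H. apply sumN_le. intros. apply (nuB_bnd k); auto. Qed.

Lemma SmuA_le : Sq m q muA <= Sq m q mu.
Proof. apply Sq_mono; [lra|]. intros. apply (muA_bnd k); auto. Qed.

Lemma pair_P1 : Sq m q (conv m muA nuB) <= powr 2 (q - 1) * powr (mass m IB nu) q * Sq m q muA.
Proof. set (nB := mass m IB nu). destruct mass_bnd as [Hn0 Hn1]. fold nB in Hn0, Hn1.
  set (mA := sumN N muA).
  assert (HmA : 0 <= mA) by (apply sumN_nonneg; intros; apply (muA_bnd k); auto).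
  assert (H1 : Sq m q (conv m muA nuB) <= powr (al * nB) (q - 1) * (mA * nB)).
  { replace (mA * nB) with (sumN N (conv m muA nuB)).
    2:{ rewrite conv_total. reflexivity. }
    apply Sq_bound; auto. intros k Hk. split.
    - apply conv_nonneg; intros; [apply (muA_bnd k0)|apply (nuB_bnd k0)]; auto.
    - apply conv_boundl; auto. intros. destruct (muA_bnd k0) as [_ [Hx _]]; auto. pose proof (IA_nn k0).
      destruct (HIA k0) as [E|E]; rewrite E in Hx; lra.
      intros; apply (nuB_bnd k0); auto. }
  assert (H2 : powr (al / 2) (q - 1) * mA <= Sq m q muA).
  { apply Sq_lower; auto; [lra|]. intros k Hk. destruct (muA_bnd k Hk) as [_ [Ha Hb]].
    destruct (HIA k) as [E|E]; rewrite E in *; [left; lra|right; lra]. }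
  rewrite powr_mul in H1 by lra. replace al with (2 * (al / 2)) in H1 at 1 by field.
  rewrite powr_mul in H1 by lra.
  rewrite (powr_split q nB) by auto.
  assert (0 <= powr 2 (q - 1)) by apply powr_nonneg.
  assert (0 <= powr nB (q - 1)) by apply powr_nonneg.
  assert (0 <= powr (al / 2) (q - 1)) by apply powr_nonneg.
  apply Rle_trans with (1 := H1).
  replace (powr 2 (q - 1) * powr (al / 2) (q - 1) * powr nB (q - 1) * (mA * nB))
    with (powr 2 (q - 1) * (powr nB (q - 1) * nB) * (powr (al / 2) (q - 1) * mA)) by ring.
  apply Rmult_le_compat_l; auto. apply Rmult_le_pos; auto; nra. Qed.

Lemma pair_P4a : Sq m q (conv m muA nuB) <= powr (al * be) q * Sq m q (conv m IA IB).
Proof. rewrite <- Sq_scal. 2:{ apply Rmult_le_pos; lra. }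
  2:{ intros. apply conv_nonneg; intros; [apply IA_nn|apply IB_nn]. }
  apply Sq_mono; [lra|]. intros k Hk. split.
  - apply conv_nonneg; intros; [apply (muA_bnd k0)|apply (nuB_bnd k0)]; auto.
  - rewrite <- conv_scal. apply conv_mono; intros; split.
    + apply (muA_bnd k0); auto.
    + apply (muA_bnd k0); auto.
    + apply (nuB_bnd k0); auto.
    + apply (nuB_bnd k0); auto. Qed.

Lemma pair_P4b : powr (al / 2) q * Sq m q IA <= Sq m q mu.
Proof. rewrite <- Sq_scal by (auto; try lra; intros; apply IA_nn). eapply Rle_trans; [|apply SmuA_le].
  apply Sq_mono; [lra|]. intros k Hk. split. pose proof (IA_nn k); nra. apply (muA_bnd k); auto. Qed.

Lemma pair_P4c : powr (be / 2) q * powr (sumN N IB) q <= 1.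
Proof. rewrite <- powr_mul by (try lra; apply sumN_nonneg; intros; apply IB_nn).
  apply powr_le1; [lra|]. split. apply Rmult_le_pos; [lra|apply sumN_nonneg; intros; apply IB_nn].
  destruct mass_bnd as [_ H]. eapply Rle_trans; [|apply H]. unfold mass. rewrite <- sumN_scal.
  apply sumN_le. intros k Hk. apply (nuB_bnd k); auto. Qed.

End Pair.

Lemma indA_band m q mu Jn i :
  indA m q mu (Z.of_nat Jn - Z.of_nat i) =
  band (2 ^ i * (r2 (- INR Jn - 1) * powr (lqnorm m q mu) (conj_exp q)))
       (2 ^ (S i) * (r2 (- INR Jn - 1) * powr (lqnorm m q mu) (conj_exp q))) mu.
Proof. unfold indA. cbv zeta. rewrite !powerRZ_r2, IZR_lev, IZR_lev2, !r2_plus, !r2_INR. f_equal; ring. Qed.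

Lemma indB_band m nu Jn i :
  indB m nu (Z.of_nat Jn - Z.of_nat i) =
  band (2 ^ i * r2 (- INR Jn - 1 - INR m)) (2 ^ (S i) * r2 (- INR Jn - 1 - INR m)) nu.
Proof. unfold indB. cbv zeta. rewrite !powerRZ_r2, IZR_lev, IZR_lev2, opp_IZR, <- INR_IZR_INZ.
  replace (- INR Jn - 1 - INR m) with ((- INR Jn - 1) + - INR m) by ring.
  rewrite !r2_plus, !r2_INR. f_equal; ring. Qed.

Lemma band_nn a b f x : 0 <= band a b f x.
Proof. destruct (band_01 a b f x) as [E|E]; lra. Qed.

Lemma tail_cover f c n x : 0 < c -> 0 <= f x <= 1 -> 1 <= 2 ^ n * c ->
  f x <= (if Rle_dec (f x) c then f x else 0) + sumN n (fun i => restrict (band (2 ^ i * c) (2 ^ (S i) * c) f) f x).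
Proof. intros Hc Hf Hn.
  assert (Hs : forall i, (i < n)%nat -> 0 <= restrict (band (2 ^ i * c) (2 ^ (S i) * c) f) f x).
  { intros. unfold restrict. apply Rmult_le_pos; [apply band_nn|lra]. }
  destruct (Rle_dec (f x) c).
  - assert (0 <= sumN n (fun i => restrict (band (2 ^ i * c) (2 ^ (S i) * c) f) f x)) by (apply sumN_nonneg; auto). lra.
  - destruct (cover n c (f x)) as [i [Hi Hb]]; try lra.
    eapply Rle_trans; [|apply Rplus_le_compat_l; apply (sumN_term_le n _ i); auto].
    unfold restrict. rewrite band_eq1 by auto. lra. Qed.

Lemma restrict_band_bnd a b f x : 0 <= f x -> 0 <= restrict (band a b f) f x <= f x.
Proof. intros. unfold restrict. destruct (band_01 a b f x) as [E|E]; rewrite E; lra. Qed.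

Lemma conv_total' m f g : sumN (grid m) (conv m f g) = sumN (grid m) f * sumN (grid m) g.
Proof. apply conv_total. Qed.

Theorem mainTheorem8 :
  forall (eps q : R), 0 < eps -> 1 < q ->
  exists M0 : nat, forall m : nat, (M0 <= m)%nat ->
  forall mu nu : nat -> R,
    is_measure m mu -> is_measure m nu ->
    lqnorm m q (conv m mu nu) >= Rpower 2 (- (eps * INR m)) * lqnorm m q mu ->
    exists j j' : Z,
      IZR j <= 2 * eps * conj_exp q * INR m /\
      IZR j' <= 2 * eps * conj_exp q * INR m /\
      lqnorm m q (conv m (indA m q mu j) (indB m nu j'))
        >= Rpower 2 (- (2 * eps * INR m)) * lqnorm m q (indA m q mu j)
           * lqnorm m 1 (indB m nu j') /\
      lqnorm m q (restrict (indA m q mu j) mu)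
        >= Rpower 2 (- (2 * eps * INR m)) * lqnorm m q mu /\
      mass m (indB m nu j') nu >= Rpower 2 (- (2 * eps * INR m)).
Proof.
  intros eps q Heps Hq.
  set (qq := conj_exp q).
  assert (Hqq : qq * (q - 1) = q) by (unfold qq, conj_exp; field; lra).
  assert (Hqq0 : 0 < qq) by (unfold qq, conj_exp; apply Rdiv_lt_0_compat; lra).
  set (K0 := S (Z.to_nat (up (1 / (q - 1))))).
  assert (HK0 : 1 + 1 / (q - 1) <= INR K0).
  { unfold K0. rewrite S_INR. pose proof (up_nat (1 / (q - 1))). 
    assert (0 <= 1 / (q - 1)) by (left; apply Rdiv_lt_0_compat; lra). specialize (H H0). lra. }
  set (a := 2 * eps * qq + 1). set (b := 1 + INR K0).
  assert (HK0p : 0 <= INR K0) by apply pos_INR.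
  destruct (asym (4 * powr 16 q) a b (2 * q + 2) (eps * q)) as [M0 HM0].
  { pose proof (powr_gt0 16 q). lra. } { unfold a; nra. } { unfold b; lra. } { lra. } { nra. }
  exists M0. intros m Hm mu nu Hmu Hnu Hconv.
  set (X := 2 * eps * qq * INR m).
  assert (HX : 0 <= X).
  { unfold X. apply Rmult_le_pos; [|apply pos_INR]. assert (0 < 2 * eps) by lra. left; apply Rmult_lt_0_compat; lra. }
  set (Jn := Z.to_nat (up X - 1)).
  assert (HJn : INR Jn <= X /\ X < INR Jn + 1).
  { destruct (archimed X) as [H1 H2]. assert (0 < up X)%Z by (apply lt_IZR; lra).
    unfold Jn. rewrite INR_IZR_INZ, Z2Nat.id by lia. rewrite minus_IZR. lra. }
  assert (HJq : 2 * eps * INR m * q <= (INR Jn + 1) * (q - 1)).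
  { destruct HJn. assert (H1 : X * (q - 1) <= (INR Jn + 1) * (q - 1)) by (apply Rmult_le_compat_r; lra).
    replace (X * (q - 1)) with (2 * eps * INR m * (qq * (q - 1))) in H1 by (unfold X; ring). rewrite Hqq in H1. lra. }
  set (L := (Jn + 1 + m + K0)%nat). set (L' := (Jn + 1 + m)%nat).
  set (N := grid m).
  set (S0 := Sq m q mu).
  assert (HSlow := Sq_measure_lower m q mu Hq Hmu). fold S0 in HSlow.
  assert (HS0 : 0 < S0) by (pose proof (r2_pos (- (INR m + 1) * (q - 1))); lra).
  set (M := powr (lqnorm m q mu) qq).
  assert (HM : M = powr S0 (1 / (q - 1))).
  { unfold M. rewrite lqnorm_Sq. fold S0. rewrite powr_powr by lra. f_equal. unfold qq, conj_exp. field; lra. }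
  assert (HMq : powr M (q - 1) = S0).
  { rewrite HM, powr_powr by lra. replace (1 / (q - 1) * (q - 1)) with 1 by (field; lra). apply powr_1r; lra. }
  assert (HMpos : 0 < M) by (rewrite HM; apply powr_gt0; auto).
  set (c := r2 (- INR Jn - 1) * M).
  set (c' := r2 (- INR Jn - 1 - INR m)).
  assert (Hc : 0 < c) by (unfold c; pose proof (r2_pos (- INR Jn - 1)); nra).
  assert (Hc' : 0 < c') by apply r2_pos.
  assert (Hcov : 1 <= 2 ^ L * c).
  { unfold c. rewrite <- r2_INR, <- Rmult_assoc, <- r2_plus.
    assert (HMl : r2 (- (INR m + 1) - 1 / (q - 1)) <= M).
    { rewrite HM. replace (- (INR m + 1) - 1 / (q - 1)) with ((- (INR m + 1) * (q - 1) + - (1)) * (1 / (q - 1))) by (field; lra).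
      rewrite <- powr_r2. apply powr_mono. left; apply Rdiv_lt_0_compat; lra.
      split. left; apply r2_pos. rewrite r2_plus, r2_opp, r2_1. lra. }
    apply Rle_trans with (r2 (INR L + (- INR Jn - 1)) * r2 (- (INR m + 1) - 1 / (q - 1))).
    2:{ apply Rmult_le_compat_l; [left; apply r2_pos|auto]. }
    rewrite <- r2_plus. apply Rle_trans with (r2 0); [rewrite r2_0; lra|]. apply r2_le. unfold L. rewrite !plus_INR. simpl (INR 1). lra. }
  assert (Hcov' : 1 <= 2 ^ L' * c').
  { unfold c'. rewrite <- r2_INR, <- r2_plus. apply Rle_trans with (r2 0); [rewrite r2_0; lra|]. apply r2_le. unfold L'. rewrite !plus_INR. simpl (INR 1). lra. }
  set (mut := fun x => if Rle_dec (mu x) c then mu x else 0).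
  set (nut := fun x => if Rle_dec (nu x) c' then nu x else 0).
  set (IAf := fun i => indA m q mu (Z.of_nat Jn - Z.of_nat i)).
  set (IBf := fun i => indB m nu (Z.of_nat Jn - Z.of_nat i)).
  set (Fm := fun i => restrict (IAf i) mu).
  set (Gm := fun i => restrict (IBf i) nu).
  assert (HIAf : forall i, IAf i = band (2 ^ i * c) (2 ^ (S i) * c) mu) by (intros; apply indA_band).
  assert (HIBf : forall i, IBf i = band (2 ^ i * c') (2 ^ (S i) * c') nu) by (intros; apply indB_band).
  assert (Hmu01 := measure_le1 m mu). assert (Hnu01 := measure_le1 m nu).
  assert (Hmut : forall k, (k < N)%nat -> 0 <= mut k <= mu k).
  { intros k Hk. destruct (Hmu01 k Hmu Hk). unfold mut. destruct (Rle_dec (mu k) c); lra. }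
  assert (Hnut : forall k, (k < N)%nat -> 0 <= nut k <= nu k).
  { intros k Hk. destruct (Hnu01 k Hnu Hk). unfold nut. destruct (Rle_dec (nu k) c'); lra. }
  assert (Hdec := decomp m q mu nu mut nut Fm Gm L L').
  assert (HSF : Sq m q (conv m mu nu) <= powr 2 q * Sq m q (conv m mut nu) + powr 2 q * powr (INR L) q *
    sumN L (fun i => powr 2 q * (Sq m q (conv m mu nut) + powr (INR L') q *
      sumN L' (fun i' => Sq m q (conv m (Fm i) (Gm i')))))).
  { apply Hdec; try lra.
    - intros; apply Hmu01; auto.
    - intros; apply Hnu01; auto.
    - intros; apply Hmut; auto.
    - intros; apply Hnut; auto.
    - intros i k Hk. unfold Fm. apply restrict_band_bnd. apply Hmu01; auto.
    - intros i k Hk. unfold Gm. apply restrict_band_bnd. apply Hnu01; auto.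
    - intros k Hk. apply Rle_trans with (mut k + sumN L (fun i => restrict (band (2 ^ i * c) (2 ^ (S i) * c) mu) mu k)).
      + apply tail_cover; auto.
      + right. f_equal. apply sumN_ext. intros. unfold Fm. rewrite HIAf. reflexivity.
    - intros k Hk. apply Rle_trans with (nut k + sumN L' (fun i => restrict (band (2 ^ i * c') (2 ^ (S i) * c') nu) nu k)).
      + apply tail_cover; auto.
      + right. f_equal. apply sumN_ext. intros. unfold Gm. rewrite HIBf. reflexivity. }
  set (E := r2 (- (eps * INR m) * q)).
  set (E2 := r2 (- (2 * eps * INR m) * q)).
  assert (HE2 : E2 = E * E) by (unfold E2, E; rewrite <- r2_plus; f_equal; ring).
  assert (HEpos : 0 < E) by apply r2_pos.
  assert (HT1 : Sq m q (conv m mut nu) <= E2 * S0).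
  { apply Rle_trans with (powr c (q - 1) * sumN N (conv m mut nu)).
    - apply Sq_bound; auto. intros k Hk. split.
      + apply conv_nonneg; intros; [apply Hmut|apply Hnu01]; auto.
      + apply Rle_trans with (c * sumN N nu). apply conv_boundl; auto.
        intros. unfold mut. destruct (Rle_dec (mu k0) c); lra. intros; apply Hnu01; auto.
        destruct Hnu as [_ Hn1]. fold N in Hn1. rewrite Hn1. lra.
    - unfold N; rewrite conv_total'; fold N. destruct Hnu as [_ Hn1]. fold N in Hn1. rewrite Hn1, Rmult_1_r.
      assert (sumN N mut <= 1).
      { destruct Hmu as [_ Hm1]. fold N in Hm1. rewrite <- Hm1. apply sumN_le. intros; apply Hmut; auto. }
      assert (0 <= sumN N mut) by (apply sumN_nonneg; intros; apply Hmut; auto).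
      unfold c. rewrite powr_mul by (try lra; left; apply r2_pos). rewrite HMq, powr_r2.
      assert (r2 ((- INR Jn - 1) * (q - 1)) <= E2).
      { unfold E2. apply r2_le. clear - HJq. clearbody Jn. nra. }
      pose proof (r2_pos ((- INR Jn - 1) * (q - 1))).
      apply Rle_trans with (r2 ((- INR Jn - 1) * (q - 1)) * S0 * 1).
      { apply Rmult_le_compat_l; [nra|lra]. }
      rewrite Rmult_1_r. apply Rmult_le_compat_r; lra. }
  assert (HT2 : Sq m q (conv m mu nut) <= E2 * powr 2 q * S0).
  { apply Rle_trans with (powr c' (q - 1) * sumN N (conv m mu nut)).
    - apply Sq_bound; auto. intros k Hk. split.
      + apply conv_nonneg; intros; [apply Hmu01|apply Hnut]; auto.
      + apply Rle_trans with (c' * sumN N mu). apply conv_boundr; auto.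
        intros; apply Hmu01; auto. intros. unfold nut. destruct (Rle_dec (nu k0) c'); lra.
        destruct Hmu as [_ Hm1]. fold N in Hm1. rewrite Hm1. lra.
    - unfold N; rewrite conv_total'; fold N. destruct Hmu as [_ Hm1]. fold N in Hm1. rewrite Hm1, Rmult_1_l.
      assert (sumN N nut <= 1).
      { destruct Hnu as [_ Hn1]. fold N in Hn1. rewrite <- Hn1. apply sumN_le. intros; apply Hnut; auto. }
      assert (0 <= sumN N nut) by (apply sumN_nonneg; intros; apply Hnut; auto).
      assert (Hpc : 0 <= powr c' (q - 1)) by apply powr_nonneg.
      apply Rle_trans with (powr c' (q - 1)). nra.
      unfold c'. rewrite powr_r2.
      apply Rle_trans with (E2 * r2 (q + (- (INR m + 1) * (q - 1) + - (1)))).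
      + unfold E2. rewrite <- r2_plus. apply r2_le. nra.
      + rewrite Rmult_assoc. apply Rmult_le_compat_l. unfold E2; left; apply r2_pos.
        rewrite !r2_plus, r2_opp, r2_1. replace (powr 2 q) with (r2 q) by (rewrite powr_pos by lra; reflexivity).
        pose proof (r2_pos q). apply Rmult_le_compat_l; lra. }
  set (Lam := powr (INR L) (q + 1) * powr (INR L') (q + 1)).
  assert (HL1 : 1 <= INR L') by (unfold L'; rewrite !plus_INR; simpl (INR 1); pose proof (pos_INR Jn); pose proof (pos_INR m); lra).
  assert (HLL : INR L' <= INR L) by (apply le_INR; unfold L, L'; lia).
  assert (HLa : INR L <= a * INR m + b).
  { unfold L, a, b. rewrite !plus_INR. simpl (INR 1). destruct HJn. unfold X in *. lra. }
  assert (HpL1 : 1 <= powr (INR L') (q + 1)) by (apply powr_ge1; lra).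
  assert (HpL : 1 <= powr (INR L) (q + 1)) by (apply powr_ge1; lra).
  assert (HZ : 4 * powr 16 q * Lam * E <= 1).
  { assert (HLam : Lam <= powr (a * INR m + b) (2 * q + 2)).
    { unfold Lam. replace (2 * q + 2) with ((q + 1) + (q + 1)) by ring. rewrite (powr_plus (q + 1) (q + 1) (a * INR m + b)) by lra.
      apply Rmult_le_compat; try (left; lra). apply powr_mono; lra. apply powr_mono; lra. }
    specialize (HM0 m Hm).
    assert (r2 (eps * q * INR m) * E = 1) by (unfold E; rewrite <- r2_plus; rewrite <- r2_0; f_equal; ring).
    pose proof (powr_gt0 16 q). assert (0 <= 4 * powr 16 q) by lra.
    apply Rle_trans with (4 * powr 16 q * powr (a * INR m + b) (2 * q + 2) * E).
    { apply Rmult_le_compat_r; [lra|]. apply Rmult_le_compat_l; auto. }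
    apply Rle_trans with (r2 (eps * q * INR m) * E); [apply Rmult_le_compat_r; lra|lra]. }
  assert (H416 : powr 4 q * powr 4 q = powr 16 q) by (rewrite <- powr_mul by lra; f_equal; ring).
  assert (H248 : powr 2 q * powr 4 q = powr 8 q) by (rewrite <- powr_mul by lra; f_equal; ring).
  assert (H816 : powr 8 q <= powr 16 q) by (apply powr_mono; lra).
  assert (H24 : powr 2 q <= powr 4 q) by (apply powr_mono; lra).
  assert (H2q1 : powr 2 (q - 1) <= powr 4 q).
  { apply Rle_trans with (powr 2 q). apply powr_ge1_exp; lra. auto. }
  assert (Hp2 : 0 < powr 2 q) by (apply powr_gt0; lra).
  assert (Hp4 : 0 < powr 4 q) by (apply powr_gt0; lra).
  set (Y := E * S0 / (4 * powr 4 q * Lam)).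
  assert (HLam0 : 1 <= Lam) by (unfold Lam; nra).
  assert (HYdef : Y * (4 * powr 4 q * Lam) = E * S0) by (unfold Y; field; nra).
  assert (HY : powr 4 q * E2 * S0 <= Y).
  { rewrite HE2. replace (powr 4 q * (E * E) * S0) with (Y * (4 * powr 16 q * Lam * E)).
    2:{ rewrite <- H416. replace (Y * (4 * (powr 4 q * powr 4 q) * Lam * E)) with ((Y * (4 * powr 4 q * Lam)) * powr 4 q * E) by ring.
        rewrite HYdef. ring. }
    assert (0 <= Y) by (unfold Y; apply Rmult_le_pos; [nra|left; apply Rinv_0_lt_compat; nra]). nra. }
  assert (HF : Sq m q (conv m mu nu) >= E * S0).
  { unfold E. rewrite <- powr_r2. apply from_root; try lra.
    - apply Sq_nonneg.
    - left; apply r2_pos.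
    - rewrite <- !lqnorm_Sq. exact Hconv. }
  destruct (classic (exists i i', (i < L)%nat /\ (i' < L')%nat /\ Y <= Sq m q (conv m (Fm i) (Gm i')))) as [Hex|Hnex].
  2:{ exfalso.
    assert (Hall : forall i i', (i < L)%nat -> (i' < L')%nat -> Sq m q (conv m (Fm i) (Gm i')) <= Y).
    { intros i i' Hi Hi'. destruct (Rle_dec (Sq m q (conv m (Fm i) (Gm i'))) Y); auto.
      exfalso. apply Hnex. exists i, i'. repeat split; auto. lra. }
    assert (Hin : forall i, (i < L)%nat -> sumN L' (fun i' => Sq m q (conv m (Fm i) (Gm i'))) <= INR L' * Y).
    { intros. rewrite <- sumN_const. apply sumN_le. intros; apply Hall; auto. }
    assert (Hout : sumN L (fun i => powr 2 q * (Sq m q (conv m mu nut) + powr (INR L') q *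
        sumN L' (fun i' => Sq m q (conv m (Fm i) (Gm i'))))) <= INR L * (powr 2 q * (E2 * powr 2 q * S0 + powr (INR L') q * (INR L' * Y)))).
    { rewrite <- sumN_const. apply sumN_le. intros i Hi. apply Rmult_le_compat_l; [lra|].
      apply Rplus_le_compat; auto. apply Rmult_le_compat_l; [apply powr_nonneg|]. auto. }
    assert (HLq : powr (INR L) q * INR L = powr (INR L) (q + 1)).
    { rewrite powr_plus, powr_1r; auto; apply pos_INR. }
    assert (HLq' : powr (INR L') q * INR L' = powr (INR L') (q + 1)).
    { rewrite powr_plus, powr_1r; auto; apply pos_INR. }
    assert (HE2S : 0 <= E2 * S0) by (rewrite HE2; nra).
    assert (Hbig : Sq m q (conv m mu nu) <= powr 2 q * (E2 * S0) + powr 8 q * powr (INR L) (q + 1) * (E2 * S0) + E * S0 / 4).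
    { eapply Rle_trans. apply HSF.
      assert (0 <= powr (INR L) q) by apply powr_nonneg.
      apply Rle_trans with (powr 2 q * (E2 * S0) + powr 2 q * powr (INR L) q *
         (INR L * (powr 2 q * (E2 * powr 2 q * S0 + powr (INR L') q * (INR L' * Y))))).
      { apply Rplus_le_compat. apply Rmult_le_compat_l; lra. apply Rmult_le_compat_l; [nra|auto]. }
      right. rewrite <- H248.
      replace (powr 2 q * powr (INR L) q * (INR L * (powr 2 q * (E2 * powr 2 q * S0 + powr (INR L') q * (INR L' * Y)))))
        with (powr 2 q * powr 2 q * (powr (INR L) q * INR L) * (E2 * powr 2 q * S0) + powr 2 q * powr 2 q * ((powr (INR L) q * INR L) * (powr (INR L') q * INR L')) * Y) by ring.
      rewrite HLq, HLq'. fold Lam.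
      replace (powr 2 q * powr 2 q) with (powr 4 q) by (rewrite <- powr_mul by lra; f_equal; ring).
      replace (E * S0 / 4) with (powr 4 q * Lam * Y).
      2:{ apply Rmult_eq_reg_r with 4; [|lra]. rewrite <- HYdef. field. }
      ring. }
    assert (HEc1 : powr 2 q * E <= / 4).
    { assert (powr 2 q <= powr 16 q) by (apply powr_mono; lra). pose proof (powr_gt0 16 q).
      assert (H16E : 0 <= powr 16 q * E) by nra.
      assert (powr 16 q * E * 1 <= powr 16 q * E * Lam) by (apply Rmult_le_compat_l; lra).
      assert (powr 2 q * E <= powr 16 q * E) by (apply Rmult_le_compat_r; lra).
      assert (powr 16 q * E * Lam = powr 16 q * Lam * E) by ring. lra. }
    assert (HEc2 : powr 8 q * powr (INR L) (q + 1) * E <= / 4).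
    { assert (powr (INR L) (q + 1) <= Lam) by (unfold Lam; nra).
      assert (powr 8 q * powr (INR L) (q + 1) <= powr 16 q * Lam) by (apply Rmult_le_compat; try lra; apply powr_nonneg).
      assert (powr 8 q * powr (INR L) (q + 1) * E <= powr 16 q * Lam * E) by (apply Rmult_le_compat_r; lra). lra. }
    rewrite HE2 in Hbig.
    assert (0 < E * S0) by nra.
    assert (powr 2 q * (E * E * S0) <= / 4 * (E * S0)) by (replace (powr 2 q * (E * E * S0)) with ((powr 2 q * E) * (E * S0)) by ring; nra).
    assert (powr 8 q * powr (INR L) (q + 1) * (E * E * S0) <= / 4 * (E * S0))
      by (replace (powr 8 q * powr (INR L) (q + 1) * (E * E * S0)) with ((powr 8 q * powr (INR L) (q + 1) * E) * (E * S0)) by ring; nra).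
    lra. }
  destruct Hex as [i [i' [Hi [Hi' HYd]]]].
  exists (Z.of_nat Jn - Z.of_nat i)%Z, (Z.of_nat Jn - Z.of_nat i')%Z.
  assert (Hjb : forall i, IZR (Z.of_nat Jn - Z.of_nat i) <= 2 * eps * conj_exp q * INR m).
  { intros k. rewrite minus_IZR, <- !INR_IZR_INZ. pose proof (pos_INR k). destruct HJn. fold qq. unfold X in *. lra. }
  set (al := 2 ^ (S i) * c). set (be := 2 ^ (S i') * c').
  assert (Hal : 0 < al) by (unfold al; pose proof (pow_lt 2 (S i)); nra).
  assert (Hbe : 0 < be) by (unfold be; pose proof (pow_lt 2 (S i')); nra).
  assert (HA : forall k, IAf i k = 1 -> al / 2 < mu k <= al).
  { intros k Hk. rewrite HIAf in Hk. apply band_1 in Hk. unfold al. simpl (2 ^ S i) in *. lra. }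
  assert (HB : forall k, IBf i' k = 1 -> be / 2 < nu k <= be).
  { intros k Hk. rewrite HIBf in Hk. apply band_1 in Hk. unfold be. simpl (2 ^ S i') in *. lra. }
  assert (HIA : forall k, IAf i k = 0 \/ IAf i k = 1) by (intros; rewrite HIAf; apply band_01).
  assert (HIB : forall k, IBf i' k = 0 \/ IBf i' k = 1) by (intros; rewrite HIBf; apply band_01).
  pose proof (pair_P1 m q mu nu (IAf i) (IBf i') al be Hq Hmu Hnu Hal HIA HIB HA HB) as P1.
  pose proof (SmuA_le m q mu (IAf i) al Hq Hmu HIA HA) as P2.
  pose proof (mass_bnd m nu (IBf i') be Hnu HIB HB) as P3.
  pose proof (pair_P4a m q mu nu (IAf i) (IBf i') al be Hq Hmu Hnu Hal Hbe HIA HIB HA HB) as P4a.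
  pose proof (pair_P4b m q mu (IAf i) al Hq Hmu Hal HIA HA) as P4b.
  pose proof (pair_P4c m q nu (IBf i') be Hq Hnu Hbe HIB HB) as P4c.
  fold S0 in P2, P4b.
  change (restrict (IAf i) mu) with (Fm i) in *.
  change (restrict (IBf i') nu) with (Gm i') in *.
  set (nB := mass m (IBf i') nu) in *.
  set (e2 := r2 (- (2 * eps * INR m))).
  assert (He2q : powr e2 q = E2) by (unfold e2, E2; apply powr_r2).
  assert (He2 : 0 < e2) by apply r2_pos.
  assert (HSA0 : 0 <= Sq m q (Fm i)) by apply Sq_nonneg.
  assert (HnBq : 0 <= powr nB q <= 1) by (split; [apply powr_nonneg|apply powr_le1; lra]).
  assert (HE2p : 0 <= E2) by (rewrite HE2; nra).
  assert (H2q1p : 0 <= powr 2 (q - 1)) by apply powr_nonneg.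
  assert (HYA : powr 2 (q - 1) * E2 * S0 <= Y).
  { eapply Rle_trans; [|apply HY]. apply Rmult_le_compat_r; [lra|]. apply Rmult_le_compat_r; lra. }
  split; [apply Hjb|]. split; [apply Hjb|]. split; [|split].
  -
    fold (IAf i) (IBf i').
    set (pa := powr (al / 2) q). set (pb := powr (be / 2) q).
    assert (Hpa : 0 < pa) by (apply powr_gt0; lra). assert (Hpb : 0 < pb) by (apply powr_gt0; lra).
    assert (Hab : powr (al * be) q = powr 4 q * pa * pb).
    { unfold pa, pb. rewrite <- !powr_mul by lra. f_equal. field. }
    rewrite Hab in P4a.
    set (SB := sumN N (IBf i')).
    assert (HSB : 0 <= SB) by (apply sumN_nonneg; intros; rewrite HIBf; apply band_nn).
    assert (HSIA : 0 <= Sq m q (IAf i)) by apply Sq_nonneg.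
    assert (HSAB : 0 <= Sq m q (conv m (IAf i) (IBf i'))) by apply Sq_nonneg.
    assert (HPB : 0 <= powr SB q) by apply powr_nonneg.
    assert (Hkey : E2 * (Sq m q (IAf i) * powr SB q) <= Sq m q (conv m (IAf i) (IBf i'))).
    { assert (Hc1 : powr 4 q * pa * pb * (E2 * (Sq m q (IAf i) * powr SB q)) <= powr 4 q * pa * pb * Sq m q (conv m (IAf i) (IBf i'))).
      { replace (powr 4 q * pa * pb * (E2 * (Sq m q (IAf i) * powr SB q))) with (powr 4 q * E2 * ((pa * Sq m q (IAf i)) * (pb * powr SB q))) by ring.
        assert ((pa * Sq m q (IAf i)) * (pb * powr SB q) <= S0).
        { assert (0 <= pa * Sq m q (IAf i)) by nra. assert (HPc : pb * powr SB q <= 1) by exact P4c.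
          assert (HPb' : pa * Sq m q (IAf i) <= S0) by exact P4b.
          apply Rle_trans with (pa * Sq m q (IAf i) * 1); [apply Rmult_le_compat_l; auto|lra]. }
        assert (powr 4 q * E2 * ((pa * Sq m q (IAf i)) * (pb * powr SB q)) <= powr 4 q * E2 * S0).
        { apply Rmult_le_compat_l; nra. }
        lra. }
      apply Rmult_le_reg_l with (powr 4 q * pa * pb); [apply Rmult_lt_0_compat; [apply Rmult_lt_0_compat|]; lra|lra]. }
    assert (Hl1 : lqnorm m 1 (IBf i') = SB).
    { unfold lqnorm. replace (1 / 1) with 1 by field. rewrite powr_1r.
      - apply sumN_ext. intros. rewrite powr_1r; auto. rewrite HIBf. apply band_nn.
      - apply sumN_nonneg. intros. apply powr_nonneg. }
    rewrite Hl1. rewrite !lqnorm_Sq. rewrite Rmult_assoc.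
    replace (powr (Sq m q (IAf i)) (1 / q) * SB) with (powr (Sq m q (IAf i) * powr SB q) (1 / q)).
    2:{ rewrite powr_mul by auto. rewrite powr_powr by auto. replace (q * (1 / q)) with 1 by (field; lra).
        rewrite powr_1r; auto. }
    change (Rpower 2 (- (2 * eps * INR m))) with e2.
    apply to_root; try lra; try apply Sq_nonneg; try (apply Rmult_le_pos; auto). rewrite He2q. lra.
  -
    change (Rpower 2 (- (2 * eps * INR m))) with e2. rewrite !lqnorm_Sq. fold S0.
    apply to_root; try lra. apply Sq_nonneg. rewrite He2q.
    assert (Y <= powr 2 (q - 1) * Sq m q (Fm i)).
    { eapply Rle_trans. apply HYd. eapply Rle_trans. apply P1.
      rewrite Rmult_assoc. apply Rmult_le_compat_l; auto. nra. }
    assert (E2 * S0 <= Sq m q (Fm i)).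
    { destruct (Rle_dec (E2 * S0) (Sq m q (Fm i))); auto.
      assert (0 < powr 2 (q - 1)) by (apply powr_gt0; lra). nra. }
    change (Sq m q (Fm i) >= E2 * S0). lra.
  -
    change (nB >= e2). apply Rle_ge.
    apply (powr_mono_inv q); try lra. rewrite He2q.
    assert (Y <= powr 2 (q - 1) * powr nB q * S0).
    { eapply Rle_trans. apply HYd. eapply Rle_trans. apply P1.
      apply Rmult_le_compat_l; auto. nra. }
    assert (0 < powr 2 (q - 1)) by (apply powr_gt0; lra).
    destruct (Rle_dec E2 (powr nB q)); auto.
    assert (powr 2 (q - 1) * powr nB q * S0 < powr 2 (q - 1) * E2 * S0).
    { apply Rmult_lt_compat_r; auto. apply Rmult_lt_compat_l; auto. lra. }
    lra.
Qed.
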